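(* Let $k\ge 3$ and let $\varepsilon\in(0,1)$ with $1/\varepsilon>k$. Let $m\in\mathbb{N}$ satisfy $1/m<\varepsilon\le 1/(m-1)$ and put $N=m^2$. Let $E\subseteq[0,1]$ be a set that $\varepsilon$-avoids $k$APs. Then for every $j\ge 0$ and every $N$-adic interval $I=[iN^{-j},(i+1)N^{-j})$, the number of $N$-adic subintervals of $I$ of length $N^{-j-1}$ that intersect $E$ is strictly less than $m\,(r_k(m)+1)$.
   Context: A $k$-term arithmetic progression ($k$AP) is a set $P=\{x, x+\lambda, \dots, x+(k-1)\lambda\}\subset\mathbb{R}$ with $\lambda>0$, called the gap length of $P$. For $M\in\mathbb{N}$, $r_k(M)$ denotes the maximal cardinality of a subset of $\{1,\dots,M\}$ containing no $k$AP. A set $E\subset\mathbb{R}$ $\varepsilon$-avoids $k$APs if for every $k$AP $P$ with gap length $\lambda$ one has $\sup_{p\in P}\inf_{x\in E}|x-p|\ge\varepsilon\lambda$. *)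

(* Defs.v *)
From Stdlib Require Import Reals List.
Import ListNotations.
Open Scope R_scope.

Definition kAP_point (x lam : R) (t : nat) : R := x + INR t * lam.

(* E epsilon-avoids kAPs: for every kAP P with gap lam > 0,
   sup_{p in P} inf_{e in E} |e - p| >= eps * lam.
   Since P is finite, the sup is a max, so this says: some point p of P has
   inf_{e in E} |e - p| >= eps*lam, i.e. |e - p| >= eps*lam for all e in E. *)
Definition eps_avoids_kAPs (k : nat) (eps : R) (E : R -> Prop) : Prop :=
  forall x lam : R, 0 < lam ->
    exists t : nat, (t < k)%nat /\
      forall e : R, E e -> eps * lam <= Rabs (e - kAP_point x lam t).

Definition kAP_free_nat (k : nat) (A : list nat) : Prop :=
  ~ exists x lam : R, 0 < lam /\
      forall t : nat, (t < k)%nat -> In (kAP_point x lam t) (map INR A).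

Definition subset_1_M (M : nat) (A : list nat) : Prop :=
  NoDup A /\ forall n, In n A -> (1 <= n <= M)%nat.

Definition is_rk (k M r : nat) : Prop :=
  (exists A, subset_1_M M A /\ kAP_free_nat k A /\ length A = r) /\
  (forall A, subset_1_M M A -> kAP_free_nat k A -> (length A <= r)%nat).

Definition sub_left (N : nat) (i : Z) (j s : nat) : R :=
  IZR i / INR N ^ j + INR s / INR N ^ (S j).

Definition meets_subinterval (E : R -> Prop) (N : nat) (i : Z) (j s : nat) : Prop :=
  exists e, E e /\ sub_left N i j s <= e < sub_left N i j s + / INR N ^ (S j).

(* Main.v *)
Require Import Defs.
From Stdlib Require Import Reals List Lra Lia Classical FinFun.
Import ListNotations.
Open Scope R_scope.

Lemma ap_contra (k m : nat) (eps : R) (E : R -> Prop) (i : Z) (j b : nat) (x lam : R) :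
  INR m * eps > 1 -> 1 <= lam -> eps_avoids_kAPs k eps E ->
  (forall t, (t < k)%nat -> exists s, meets_subinterval E (m ^ 2) i j s /\
      INR s = (x + INR t * lam - 1) * INR m + INR b) -> False.
Proof.
  intros Hme Hl Hav H.
  assert (Hm0 : 0 < INR m).
  { destruct m. simpl in Hme. lra. apply lt_0_INR; lia. }
  assert (HD : 0 < INR (m ^ 2) ^ Datatypes.S j).
  { apply pow_lt. rewrite pow_INR. apply pow_lt. exact Hm0. }
  set (d := / INR (m ^ 2) ^ Datatypes.S j).
  assert (Hd : 0 < d) by (apply Rinv_0_lt_compat; exact HD).
  set (X := IZR i / INR (m ^ 2) ^ j + ((x - 1) * INR m + INR b) * d).
  set (L := lam * INR m * d).
  assert (HL : 0 < L) by (unfold L; repeat apply Rmult_lt_0_compat; lra).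
  destruct (Hav X L HL) as [t [Ht Hall]].
  destruct (H t Ht) as [s [[e [He [He1 He2]]] Hs]].
  specialize (Hall e He).
  assert (Heq : sub_left (m ^ 2) i j s = kAP_point X L t).
  { unfold sub_left, kAP_point, X, L. fold d. unfold Rdiv at 2.
    fold d. rewrite Hs. ring. }
  rewrite <- Heq in Hall. fold d in He2.
  assert (Habs : Rabs (e - sub_left (m ^ 2) i j s) < d).
  { rewrite Rabs_right; lra. }
  assert (eps * L > d).
  { unfold L.
    assert (eps * (lam * INR m * d) - d = d * ((INR m * eps - 1) + INR m * eps * (lam - 1))) by ring.
    assert (0 < d * ((INR m * eps - 1) + INR m * eps * (lam - 1))).
    { apply Rmult_lt_0_compat. lra.
      assert (0 <= INR m * eps * (lam - 1)).
      { apply Rmult_le_pos; [lra|lra]. }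
      lra. }
    lra. }
  lra.
Qed.

Definition Pb (Sl : list nat) (m b : nat) (a : nat) : bool :=
  if in_dec Nat.eq_dec (a * m + b)%nat Sl then true else false.

Definition Ab (Sl : list nat) (m b : nat) : list nat :=
  map Nat.succ (filter (Pb Sl m b) (seq 0 m)).

Lemma Ab_subset Sl m b : subset_1_M m (Ab Sl m b).
Proof.
  split.
  - apply FinFun.Injective_map_NoDup; [intros u v Huv; injection Huv; auto|].
    apply NoDup_filter, seq_NoDup.
  - intros n Hn. unfold Ab in Hn. apply in_map_iff in Hn as [a [<- Ha]].
    apply filter_In in Ha as [Ha _]. apply in_seq in Ha. destruct Ha as [_ Ha]; split; [apply le_n_S, Nat.le_0_l | exact Ha].
Qed.

Lemma Ab_in Sl m b n : In n (Ab Sl m b) -> exists a, n = Datatypes.S a /\ In (a * m + b)%nat Sl.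
Proof.
  intros Hn. unfold Ab in Hn. apply in_map_iff in Hn as [a [<- Ha]].
  apply filter_In in Ha as [_ Hp]. unfold Pb in Hp.
  destruct (in_dec Nat.eq_dec (a * m + b)%nat Sl); [|discriminate].
  exists a; auto.
Qed.

Definition bigL (Sl : list nat) (m : nat) (bs : list nat) : list nat :=
  flat_map (fun b => map (fun a => (a * m + b)%nat) (filter (Pb Sl m b) (seq 0 m))) bs.

Lemma bigL_len Sl m r bs : (forall b, In b bs -> (length (Ab Sl m b) <= r)%nat) ->
  (length (bigL Sl m bs) <= length bs * r)%nat.
Proof.
  induction bs as [|b bs IH]; intros H; simpl. lia.
  unfold bigL in *; simpl. rewrite length_app, length_map.
  assert (H1 := H b (or_introl eq_refl)). unfold Ab in H1. rewrite length_map in H1.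
  specialize (IH (fun b' Hb => H b' (or_intror Hb))). lia.
Qed.

Lemma bigL_incl Sl m : (forall s, In s Sl -> (s < m ^ 2)%nat) -> incl Sl (bigL Sl m (seq 0 m)).
Proof.
  intros H s Hs. specialize (H s Hs).
  assert (Hm : (0 < m)%nat) by (destruct m; simpl in H; lia).
  unfold bigL. apply in_flat_map. exists (s mod m)%nat. split.
  - apply in_seq. pose proof (Nat.mod_upper_bound s m); lia.
  - apply in_map_iff. exists (s / m)%nat. split.
    + rewrite Nat.mul_comm. symmetry. apply Nat.div_mod. lia.
    + apply filter_In. split.
      * apply in_seq. split; [lia|]. apply Nat.Div0.div_lt_upper_bound.
        simpl in H. lia.
      * unfold Pb. destruct (in_dec Nat.eq_dec (s / m * m + s mod m)%nat Sl) as [|n]; auto.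
        exfalso; apply n. rewrite Nat.mul_comm, <- Nat.div_mod by lia. exact Hs.
Qed.

Theorem mainTheorem10 :
  forall (k : nat) (eps : R) (m r : nat) (E : R -> Prop),
    (3 <= k)%nat ->
    0 < eps < 1 ->
    / eps > INR k ->
    (2 <= m)%nat ->
    / INR m < eps <= / INR (m - 1) ->
    is_rk k m r ->
    (forall x, E x -> 0 <= x <= 1) ->
    eps_avoids_kAPs k eps E ->
    forall (j : nat) (i : Z) (S : list nat),
      NoDup S ->
      (forall s, In s S -> (s < m ^ 2)%nat /\ meets_subinterval E (m ^ 2) i j s) ->
      (length S < m * (r + 1))%nat.
Proof.
  intros k eps m r E Hk Heps _ Hm [Hme _] [_ Hrk] _ Hav j i S HS HSs.
  assert (Hm0 : 0 < INR m) by (apply lt_0_INR; lia).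
  assert (Hme' : INR m * eps > 1).
  { apply (Rmult_lt_compat_l (INR m)) in Hme; auto.
    rewrite Rinv_r in Hme; lra. }
  destruct (classic (exists b, In b (seq 0 m) /\ ~ (length (Ab S m b) <= r)%nat))
    as [[b [Hb Hlen]] | Hno].
  - exfalso. apply Hlen. apply Hrk. apply Ab_subset.
    intros [x [lam [Hlam Hpts]]].
    assert (Hpt : forall t, (t < k)%nat -> exists a, INR (Datatypes.S a) = x + INR t * lam
               /\ In (a * m + b)%nat S).
    { intros t Ht. specialize (Hpts t Ht). apply in_map_iff in Hpts as [n [Hn Hin]].
      apply Ab_in in Hin as [a [-> Ha]]. exists a. split; auto. }
    assert (Hl1 : 1 <= lam).
    { destruct (Hpt 0%nat ltac:(lia)) as [a0 [H0 _]].
      destruct (Hpt 1%nat ltac:(lia)) as [a1 [H1 _]].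
      change (INR 0) with 0 in H0; change (INR 1) with 1 in H1.
      assert (INR (Datatypes.S a0) < INR (Datatypes.S a1)) by lra.
      apply INR_lt in H.
      assert (INR (Datatypes.S (Datatypes.S a0)) <= INR (Datatypes.S a1)) by (apply le_INR; lia).
      rewrite (S_INR (Datatypes.S a0)) in H2. lra. }
    apply (ap_contra k m eps E i j b x lam Hme' Hl1 Hav).
    intros t Ht. destruct (Hpt t Ht) as [a [Ha HaS]].
    exists (a * m + b)%nat. split.
    + apply (HSs _ HaS).
    + rewrite plus_INR, mult_INR. rewrite <- Ha, S_INR. ring.
  - assert (Hall : forall b, In b (seq 0 m) -> (length (Ab S m b) <= r)%nat).
    { intros b Hb. destruct (Nat.le_gt_cases (length (Ab S m b)) r); auto.
      exfalso; apply Hno; exists b; split; auto; lia. }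
    pose proof (bigL_len S m r _ Hall) as H1. rewrite length_seq in H1.
    assert (H2 : (length S <= length (bigL S m (seq 0 m)))%nat).
    { apply NoDup_incl_length; auto. apply bigL_incl. intros s Hs; apply HSs; auto. }
    lia.
Qed.
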